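(* For each prime number $p$, there exists a self-similar $p$-adic fractal string $\mathcal{L}_p\subseteq\mathbb{Z}_p$ of Minkowski--Bouligand dimension $D=\frac{1}{2}$ and with oscillatory period $\mathbf{p}=\frac{\pi}{\log p}$; that is, the geometric zeta function of $\mathcal{L}_p$ has a meromorphic continuation to all of $\mathbb{C}$ whose set of poles (the complex dimensions of $\mathcal{L}_p$) is exactly $\{\frac12+in\frac{\pi}{\log p} : n\in\mathbb{Z}\}$, and $\frac12$ is the abscissa of convergence of the series defining the geometric zeta function.
   Context: Let $p$ be a prime and $\mathbb{Z}_p$ the ring of $p$-adic integers with the $p$-adic absolute value $|\cdot|_p$ ($|p|_p=p^{-1}$). A $p$-adic fractal string $\mathcal{L}$ in $\mathbb{Z}_p$ is a countable disjoint union of balls of the form $a+p^n\mathbb{Z}_p$ ($a\in\mathbb{Z}_p$, $n\geq 1$) contained in $\mathbb{Z}_p$; the ball $a+p^n\mathbb{Z}_p$ has length $p^{-n}$, and $\mathcal{L}$ is encoded by its sequence of lengths $l_j$ (counted with multiplicity). Its geometric zeta function is $\zeta_{\mathcal{L}}(s)=\sum_j l_j^s$, defined for $\Re(s)$ larger than the abscissa of convergence, and (when possible) meromorphically continued to $\mathbb{C}$. The complex dimensions of $\mathcal{L}$ are the poles of this meromorphic continuation. The Minkowski--Bouligand dimension $D$ of $\mathcal{L}$ is the abscissa of convergence of $\sum_j l_j^s$. $\mathcal{L}$ is said to have oscillatory period $\mathbf{p}>0$ if its set of complex dimensions is exactly $\{D+in\mathbf{p}: n\in\mathbb{Z}\}$.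 $\mathcal{L}$ is self-similar if it is the complement in $\mathbb{Z}_p$ of the unique nonempty compact set $K\subseteq\mathbb{Z}_p$ satisfying $K=\bigcup_{i}\phi_i(K)$ for a finite family of at least two similarity contractions $\phi_i(x)=c_i+p^{m}x$ of $\mathbb{Z}_p$ into itself (with $c_i\in\mathbb{Z}$, $m\ge1$). *)

(* Defs.v *)
From Stdlib Require Import Reals ZArith Znumtheory List Lia ClassicalDescription.
From Coquelicot Require Import Coquelicot.
Open Scope R_scope.

(** * p-adic integers
    An element of Z_p is represented by the compatible sequence of its
    residues: x n = (x mod p^n) in [0, p^n), with x (n+1) mod p^n = x n. *)
Definition is_padic (p : Z) (x : nat -> Z) : Prop :=
  forall n : nat,
    (0 <= x n < p ^ Z.of_nat n)%Z /\
    Z.modulo (x (S n)) (p ^ Z.of_nat n) = x n.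

(** The similarity contraction phi(x) = c + p^m x  (c an integer), on residues:
    (c + p^m x) mod p^k = (c + p^m (x mod p^(k-m))) mod p^k. *)
Definition sim_map (p : Z) (m : nat) (c : Z) (x : nat -> Z) : nat -> Z :=
  fun k => Z.modulo (c + p ^ Z.of_nat m * x (k - m)%nat) (p ^ Z.of_nat k).

(** The ball a + p^n Z_p (with 0 <= a < p^n) is {y in Z_p | y n = a};
    it has length p^(-n).  [ball_in p U a n]: this ball is contained in U. *)
Definition ball_in (p : Z) (U : (nat -> Z) -> Prop) (a : Z) (n : nat) : Prop :=
  forall y, is_padic p y -> y n = a -> U y.

(** Maximal balls of level n >= 1 contained in U: the ball a + p^n Z_p is
    contained in U but its parent ball (a mod p^(n-1)) + p^(n-1) Z_p is not. *)
Definition maximal_ball_in (p : Z) (U : (nat -> Z) -> Prop) (a : Z) (n : nat) : Prop :=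
  (1 <= n)%nat /\ (0 <= a < p ^ Z.of_nat n)%Z /\ ball_in p U a n /\
  ~ ball_in p U (Z.modulo a (p ^ Z.of_nat (n - 1))) (n - 1).

Definition count_below (P : nat -> Prop) (bound : nat) : nat :=
  length (filter (fun a => if excluded_middle_informative (P a) then true else false)
                 (seq 0 bound)).

(** The p-adic fractal string given by an open set U of Z_p (its canonical
    decomposition into maximal balls), encoded by the multiplicities of its
    lengths: [string_mult p U n] = number of balls of length p^(-n). *)
Definition string_mult (p : Z) (U : (nat -> Z) -> Prop) (n : nat) : nat :=
  count_below (fun a => maximal_ball_in p U (Z.of_nat a) n) (Z.to_nat (p ^ Z.of_nat n)).

(** Compact subsets of Z_p = closed subsets of Z_p (Z_p is compact Hausdorff);
    closedness: every point of Z_p outside K has a ball around it missing K. *)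
Definition padic_compact (p : Z) (K : (nat -> Z) -> Prop) : Prop :=
  (forall x, K x -> is_padic p x) /\
  (forall x, is_padic p x -> ~ K x ->
     exists n : nat, forall y, is_padic p y -> y n = x n -> ~ K y).

Definition ss_attractor (p : Z) (m : nat) (cs : list Z) (K : (nat -> Z) -> Prop) : Prop :=
  padic_compact p K /\ (exists x, K x) /\
  (forall y, K y <-> exists c, In c cs /\ exists x, K x /\ forall k, y k = sim_map p m c x k).

(** The self-similar string associated to K: the complement of K in Z_p. *)
Definition complement_in_Zp (p : Z) (K : (nat -> Z) -> Prop) : (nat -> Z) -> Prop :=
  fun x => is_padic p x /\ ~ K x.

Definition cpow (x : R) (s : C) : C :=
  (exp (fst s * ln x) * cos (snd s * ln x), exp (fst s * ln x) * sin (snd s * ln x)).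

(** Terms of the geometric zeta function sum_j l_j^s, grouped by length:
    the level-n term is (number of balls of length p^(-n)) * (p^(-n))^s. *)
Definition zeta_term (p : Z) (N : nat -> nat) (s : C) (n : nat) : C :=
  RtoC (INR (N n)) * cpow (/ (IZR p ^ n)) s.

Definition abscissa_of_convergence (p : Z) (N : nat -> nat) (D : R) : Prop :=
  forall sigma : R,
    (D < sigma -> ex_series (fun n => INR (N n) * Rpower (/ (IZR p ^ n)) sigma)) /\
    (sigma < D -> ~ ex_series (fun n => INR (N n) * Rpower (/ (IZR p ^ n)) sigma)).

Definition meromorphic_on_C_with_poles (f : C -> C) (P : C -> Prop) : Prop :=
  (forall z : C, exists r : R, 0 < r /\
     forall w : C, w <> z -> Cmod (w - z) < r -> ~ P w) /\
  (forall z : C, ~ P z -> ex_derive (K := C_AbsRing) (V := C_NormedModule) f z) /\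
  (forall z0 : C, P z0 ->
     filterlim (fun z => Cmod (f z)) (locally' (T := C_UniformSpace) z0)
               (Rbar_locally p_infty)).

Definition complex_dimensions_are (p : Z) (N : nat -> nat) (D : R) (P : C -> Prop) : Prop :=
  exists f : C -> C,
    (forall s : C, D < fst s -> is_series (zeta_term p N s) (f s)) /\
    meromorphic_on_C_with_poles f P.

(* Main.v *)
Require Import Defs.
From Stdlib Require Import Reals ZArith Znumtheory List.
From Coquelicot Require Import Coquelicot.
Open Scope R_scope.
From Stdlib Require Import Arith Lia Lra Psatz Classical ClassicalDescription.

Module MR1.
Local Open Scope R_scope.

Lemma exp_quad a : Rabs a <= 1/2 -> Rabs (exp a - 1 - a) <= 2 * a^2.
Proof.
  intros Ha.
  assert (H1 := exp_ineq1_le a). assert (H2 := exp_ineq1_le (-a)).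
  assert (H3 : exp a * exp (-a) = 1) by (rewrite <- exp_plus; replace (a + - a) with 0 by ring; apply exp_0).
  assert (Hp := exp_pos a).
  apply Rabs_le_between in Ha.
  assert (H4 : exp a * (1 - a) <= 1) by nra.
  rewrite Rabs_pos_eq by lra.
  nra.
Qed.

Lemma exp_lin a : Rabs a <= 1/2 -> Rabs (exp a - 1) <= 2 * Rabs a.
Proof.
  intros Ha. assert (H := exp_quad a Ha).
  apply Rabs_le_between in Ha. apply Rabs_le_between in H.
  destruct (Rle_lt_dec 0 a).
  - rewrite (Rabs_pos_eq a) by lra. apply Rabs_le_between. nra.
  - rewrite (Rabs_left a) by lra. apply Rabs_le_between. nra.
Qed.

Lemma exp_le2 a : a <= 1/2 -> exp a <= 2.
Proof.
  intros Ha. assert (H2 := exp_ineq1_le (-a)).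
  assert (H3 : exp a * exp (-a) = 1) by (rewrite <- exp_plus; replace (a + - a) with 0 by ring; apply exp_0).
  assert (Hp := exp_pos a). nra.
Qed.

Lemma sin_abs_le b : Rabs (sin b) <= Rabs b.
Proof.
  assert (PI2_1 := PI2_1).
  assert (Hs : forall x, 0 < x -> Rabs (sin x) <= x).
  { intros x Hx. apply Rabs_le_between. split.
    - destruct (Rle_lt_dec 1 x).
      + assert (H := SIN_bound x). lra.
      + assert (0 < sin x) by (apply sin_gt_0; lra). lra.
    - left. apply sin_lt_x. lra. }
  destruct (Rtotal_order b 0) as [H|[H|H]].
  - rewrite (Rabs_left b) by lra. replace b with (- (- b)) by ring.
    rewrite sin_neg, Rabs_Ropp. replace (- - b) with b by ring. apply Hs. lra.
  - subst. rewrite sin_0. lra.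
  - rewrite (Rabs_pos_eq b) by lra. apply Hs; lra.
Qed.

Lemma cos_bounds b : 1 - b^2/2 <= cos b <= 1.
Proof.
  replace b with (2 * (b/2)) at 2 by field.
  rewrite cos_2a_sin.
  assert (H := sin_abs_le (b/2)).
  assert (H2 : sin (b/2) * sin (b/2) <= (b/2)*(b/2)).
  { assert (H0 : Rabs (sin (b/2)) * Rabs (sin (b/2)) <= Rabs (b/2) * Rabs (b/2)).
    { apply Rmult_le_compat; auto using Rabs_pos. }
    rewrite <- !Rabs_mult in H0.
    rewrite !Rabs_pos_eq in H0 by nra. exact H0. }
  split; [nra| apply COS_bound].
Qed.

Lemma sin_quad b : Rabs b <= 1/2 -> Rabs (sin b - b) <= b^2.
Proof.
  intros Hb.
  destruct (MVT_gen (fun x => sin x - x) 0 b (fun x => cos x - 1)) as [c [Hc Heq]].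
  - intros x _. auto_derive; [exact I| ring].
  - intros x _. apply continuity_pt_minus. apply continuity_sin. apply derivable_continuous_pt. apply derivable_pt_id.
  - rewrite sin_0 in Heq. replace (sin b - b) with ((cos c - 1) * b) by lra.
    assert (Hcb : Rabs c <= Rabs b).
    { unfold Rmin, Rmax in Hc. destruct (Rle_dec 0 b).
      - rewrite !Rabs_pos_eq; lra.
      - rewrite !Rabs_left1; lra. }
    assert (Hcc := cos_bounds c).
    rewrite Rabs_mult.
    assert (Rabs (cos c - 1) <= c^2/2) by (apply Rabs_le_between; lra).
    assert (c^2 <= b^2).
    { rewrite <- (pow2_abs c), <- (pow2_abs b). apply pow_incr. split; [apply Rabs_pos| exact Hcb]. }
    assert (b^2 = Rabs b * Rabs b) by (rewrite <- Rabs_mult; rewrite Rabs_pos_eq; nra).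
    assert (0 <= Rabs (cos c - 1)) by apply Rabs_pos.
    assert (0 <= Rabs b) by apply Rabs_pos.
    assert (Rabs b * Rabs b <= Rabs b * (1/2)) by (apply Rmult_le_compat_l; lra).
    assert (Rabs (cos c - 1) <= Rabs b) by lra.
    rewrite H1. apply Rmult_le_compat_r; lra.
Qed.

End MR1.
Import MR1.

Module MC1.
Local Open Scope R_scope.

Ltac ceq := apply injective_projections; simpl; try ring.

Definition E (z : C) : C := (exp (fst z) * cos (snd z), exp (fst z) * sin (snd z)).

Lemma E_add z w : E (z + w)%C = (E z * E w)%C.
Proof.
  destruct z as [a b], w as [c d]. unfold E, Cplus, Cmult; simpl.
  rewrite exp_plus, cos_plus, sin_plus. f_equal; ring.
Qed.

Lemma E_0 : E 0%C = 1%C.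
Proof. unfold E; simpl. rewrite exp_0, cos_0, sin_0. ceq. Qed.

Lemma Cmod_E z : Cmod (E z) = exp (fst z).
Proof.
  destruct z as [a b]. unfold E, Cmod; cbn [fst snd].
  assert (H := sin2_cos2 b). unfold Rsqr in H.
  replace ((exp a * cos b) ^ 2 + (exp a * sin b) ^ 2) with (exp a ^ 2).
  - apply sqrt_pow2. left; apply exp_pos.
  - replace (exp a ^ 2) with (exp a ^ 2 * 1) by ring. rewrite <- H. ring.
Qed.

Lemma Cmod_le_sum a b : Cmod (a, b) <= Rabs a + Rabs b.
Proof.
  unfold Cmod; cbn [fst snd].
  rewrite <- (sqrt_pow2 (Rabs a + Rabs b)) by (assert (H1 := Rabs_pos a); assert (H2 := Rabs_pos b); lra).
  apply sqrt_le_1_alt.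
  rewrite <- (pow2_abs a) at 1. rewrite <- (pow2_abs b) at 1.
  assert (H1 := Rabs_pos a); assert (H2 := Rabs_pos b). nra.
Qed.

Lemma Cmod_sq a b : Cmod (a, b) ^ 2 = a^2 + b^2.
Proof. unfold Cmod; cbn [fst snd]. apply pow2_sqrt. nra. Qed.

Lemma E_quad h : Cmod h <= 1/2 -> Cmod (E h - 1 - h)%C <= 3 * Cmod h ^ 2.
Proof.
  intros Hh. destruct h as [a b].
  assert (Ha : Rabs a <= 1/2).
  { assert (H := Rmax_Cmod (a, b)). simpl in H. assert (H' := Rmax_l (Rabs a) (Rabs b)). lra. }
  assert (Hb : Rabs b <= 1/2).
  { assert (H := Rmax_Cmod (a, b)). simpl in H. assert (H' := Rmax_r (Rabs a) (Rabs b)). lra. }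
  rewrite Cmod_sq.
  replace (E (a, b) - 1 - (a, b))%C with (exp a * cos b - 1 - a, exp a * sin b - b)
    by (unfold E, Cminus, Cplus, Copp; ceq).
  eapply Rle_trans; [apply Cmod_le_sum|].
  assert (H1 := exp_quad a Ha). assert (H2 := exp_lin a Ha).
  assert (H3 := exp_le2 a ltac:(apply Rabs_le_between in Ha; lra)).
  assert (H4 := cos_bounds b). assert (H5 := sin_abs_le b). assert (H6 := sin_quad b Hb).
  assert (He := exp_pos a).
  assert (Re : Rabs (exp a * cos b - 1 - a) <= 2 * a^2 + b^2).
  { replace (exp a * cos b - 1 - a) with ((exp a - 1 - a) + exp a * (cos b - 1)) by ring.
    eapply Rle_trans; [apply Rabs_triang|].
    rewrite Rabs_mult, (Rabs_pos_eq (exp a)) by lra.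
    assert (Rabs (cos b - 1) <= b^2/2) by (apply Rabs_le_between; lra).
    assert (exp a * Rabs (cos b - 1) <= 2 * (b^2/2)).
    { apply Rmult_le_compat; try lra. apply Rabs_pos. }
    lra. }
  assert (Im : Rabs (exp a * sin b - b) <= a^2 + 2 * b^2).
  { replace (exp a * sin b - b) with ((exp a - 1) * sin b + (sin b - b)) by ring.
    eapply Rle_trans; [apply Rabs_triang|].
    rewrite Rabs_mult.
    assert (Rabs (exp a - 1) * Rabs (sin b) <= (2 * Rabs a) * Rabs b).
    { apply Rmult_le_compat; auto using Rabs_pos. }
    assert (2 * Rabs a * Rabs b <= a^2 + b^2).
    { rewrite <- (pow2_abs a), <- (pow2_abs b). pose proof (pow2_ge_0 (Rabs a - Rabs b)); nra. }
    lra. }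
  lra.
Qed.

Lemma locally_Cmod (z : C) (P : C -> Prop) d : 0 < d ->
  (forall y, Cmod (y - z) < d -> P y) -> locally z P.
Proof.
  intros Hd H.
  assert (Hn := @norm_factor_gt_0 C_AbsRing C_NormedModule).
  exists (mkposreal (d / @norm_factor C_AbsRing C_NormedModule) ltac:(apply Rdiv_lt_0_compat; auto)).
  intros y Hy. apply H.
  apply (@norm_compat2 C_AbsRing C_NormedModule) in Hy. simpl in Hy.
  replace (norm_factor * (d / norm_factor)) with d in Hy by (field; lra).
  exact Hy.
Qed.

Lemma Cmod_locally (z : C) (P : C -> Prop) : locally z P ->
  exists d, 0 < d /\ forall y, Cmod (y - z) < d -> P y.
Proof.
  intros [eps H]. exists eps. split. apply cond_pos.
  intros y Hy. apply H. apply (@norm_compat1 C_AbsRing C_NormedModule). exact Hy.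
Qed.

Lemma locally_Cmod_abs (z : C) (P : C -> Prop) d : 0 < d ->
  (forall y, Cmod (y - z) < d -> P y) -> @locally (AbsRing_UniformSpace C_AbsRing) z P.
Proof.
  intros Hd H. exists (mkposreal d Hd). intros y Hy. apply H. exact Hy.
Qed.

Lemma quad_deriv (g : C -> C) z l d M : 0 < d ->
  (forall h, Cmod h < d -> Cmod (g (z + h) - g z - l * h)%C <= M * Cmod h ^ 2) ->
  @is_derive C_AbsRing (AbsRing_NormedModule C_AbsRing) g z l.
Proof.
  intros Hd H. split.
  - apply is_linear_scal_l.
  - intros x Hx. apply (@is_filter_lim_locally_unique C_AbsRing (AbsRing_NormedModule C_AbsRing)) in Hx. subst x.
    intros eps.
    set (d' := Rmin d (eps / (Rabs M + 1))).
    assert (Hd' : 0 < d').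
    { unfold d'. apply Rmin_pos; auto. apply Rdiv_lt_0_compat. apply cond_pos. assert (H0 := Rabs_pos M); lra. }
    apply (locally_Cmod_abs _ _ d' Hd').
    intros y Hy.
    assert (Hy1 : Cmod (y - z) < d) by (assert (Rmin d (eps / (Rabs M + 1)) <= d) by apply Rmin_l; unfold d' in Hy; lra).
    assert (Hy2 : Cmod (y - z) <= eps / (Rabs M + 1)) by (assert (Rmin d (eps / (Rabs M + 1)) <= eps / (Rabs M + 1)) by apply Rmin_r; unfold d' in Hy; lra).
    specialize (H (y - z)%C Hy1).
    replace (z + (y - z))%C with y in H by ring.
    change (Cmod (g y - g z - (y - z) * l)%C <= eps * Cmod (y - z)%C).
    replace ((y - z) * l)%C with (l * (y - z))%C by ring.
    eapply Rle_trans; [exact H|].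
    assert (Hc := Cmod_ge_0 (y - z)%C).
    assert (HM : M <= Rabs M) by apply Rle_abs.
    assert (Hpos := cond_pos eps).
    assert (Hk : (Rabs M + 1) * Cmod (y - z)%C <= eps).
    { apply Rmult_le_compat_l with (r := Rabs M + 1) in Hy2; [|assert (H0 := Rabs_pos M); lra].
      replace ((Rabs M + 1) * (eps / (Rabs M + 1))) with (pos eps) in Hy2 by (field; assert (H0 := Rabs_pos M); lra).
      lra. }
    simpl. nra.
Qed.

Lemma E_deriv z : @is_derive C_AbsRing (AbsRing_NormedModule C_AbsRing) E z (E z).
Proof.
  apply (quad_deriv E z (E z) (1/2) (3 * exp (fst z))); [lra|].
  intros h Hh.
  rewrite E_add.
  replace (E z * E h - E z - E z * h)%C with (E z * (E h - 1 - h))%C by ring.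
  rewrite Cmod_mult, Cmod_E.
  assert (H := E_quad h ltac:(lra)).
  assert (He := exp_pos (fst z)).
  replace (3 * exp (fst z) * Cmod h ^ 2) with (exp (fst z) * (3 * Cmod h ^ 2)) by ring.
  apply Rmult_le_compat_l; lra.
Qed.

End MC1.
Import MC1.

Module MC2.
Local Open Scope R_scope.

Lemma inv_deriv (u : C) : u <> 0%C -> @is_derive C_AbsRing (AbsRing_NormedModule C_AbsRing) Cinv u (- / (u * u))%C.
Proof.
  intros Hu.
  assert (Hm : 0 < Cmod u) by (apply Cmod_gt_0; auto).
  apply (quad_deriv Cinv u _ (Cmod u / 2) (2 / (Cmod u ^ 3))); [lra|].
  intros h Hh.
  assert (Huh : Cmod u / 2 <= Cmod (u + h)%C).
  { assert (H := Cmod_triangle (u + h)%C (- h)%C). rewrite Cmod_opp in H.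
    replace (u + h + - h)%C with u in H by ring. lra. }
  assert (Huh0 : (u + h)%C <> 0%C) by (apply Cmod_gt_0; lra).
  replace (/ (u + h) - / u - - / (u * u) * h)%C with (h * h * / (u * u * (u + h)))%C by (field; auto).
  rewrite !Cmod_mult, Cmod_inv by (repeat apply Cmult_neq_0; auto).
  rewrite !Cmod_mult.
  assert (Hc := Cmod_ge_0 h).
  assert (Hpos : 0 < Cmod u * Cmod u * Cmod (u + h)%C) by (apply Rmult_lt_0_compat; nra).
  apply (Rmult_le_reg_r (Cmod u * Cmod u * Cmod (u + h)%C)); auto.
  rewrite Rmult_assoc, Rinv_l by lra.
  assert (Cmod u * Cmod u * (Cmod u / 2) <= Cmod u * Cmod u * Cmod (u + h)%C).
  { apply Rmult_le_compat_l; nra. }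
  replace (2 / Cmod u ^ 3 * Cmod h ^ 2 * (Cmod u * Cmod u * Cmod (u + h)%C))
    with (Cmod h * Cmod h * (2 * (Cmod u * Cmod u * Cmod (u + h)%C) / (Cmod u * Cmod u * Cmod u))) by (field; lra).
  rewrite Rmult_1_r.
  rewrite <- (Rmult_1_r (Cmod h * Cmod h)) at 1.
  apply Rmult_le_compat_l; [nra|].
  apply (Rmult_le_reg_r (Cmod u * Cmod u * Cmod u)); [nra|].
  unfold Rdiv. replace (2 * (Cmod u * Cmod u * Cmod (u + h)%C) * / (Cmod u * Cmod u * Cmod u) * (Cmod u * Cmod u * Cmod u)) with (2 * (Cmod u * Cmod u * Cmod (u + h)%C)) by (field; nra). nra.
Qed.

Definition Wf (L : R) (s : C) : C := E (RtoC L + RtoC (-2*L) * s)%C.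
Definition ff (P : R) (s : C) : C := ((/ (1 - Wf (ln P) s)) - 1)%C * RtoC (P - 1).

Lemma Wf_eq L s : Wf L s = E ((1 - 2 * fst s) * L, -2 * L * snd s).
Proof. unfold Wf. f_equal. destruct s; unfold RtoC, Cplus, Cmult; ceq. Qed.

Lemma affine_deriv (a b s : C) : @is_derive C_AbsRing (AbsRing_NormedModule C_AbsRing) (fun s => a + b * s)%C s b.
Proof.
  apply (quad_deriv _ s b 1 0); [lra|].
  intros h _. cbv beta. replace (a + b * (s + h) - (a + b * s) - b * h)%C with (RtoC 0) by ring.
  rewrite Cmod_0. nra.
Qed.

Lemma Wf_deriv L (s : C) : @ex_derive C_AbsRing (AbsRing_NormedModule C_AbsRing) (Wf L) s.
Proof.
  eexists. unfold Wf.
  apply (@is_derive_comp C_AbsRing (AbsRing_NormedModule C_AbsRing) E (fun s => RtoC L + RtoC (-2 * L) * s)%C).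
  apply E_deriv. apply affine_deriv.
Qed.

Lemma ff_deriv P (z : C) : (1 - Wf (ln P) z)%C <> 0%C -> ex_derive (K := C_AbsRing) (V := C_NormedModule) (ff P) z.
Proof.
  intros Hz. unfold ff.
  destruct (Wf_deriv (ln P) z) as [dW HW].
  eexists.
  eapply (@is_derive_scal_l C_AbsRing C_NormedModule (fun s => (/ (1 - Wf (ln P) s) - 1)%C)).
  apply (@is_derive_minus C_AbsRing (AbsRing_NormedModule C_AbsRing) (fun s => (/ (1 - Wf (ln P) s))%C) (fun _ => RtoC 1)); [|apply is_derive_const].
  apply (@is_derive_comp C_AbsRing (AbsRing_NormedModule C_AbsRing) Cinv (fun s => (1 - Wf (ln P) s)%C)).
  apply inv_deriv; auto.
  apply (@is_derive_minus C_AbsRing (AbsRing_NormedModule C_AbsRing) (fun _ => RtoC 1) (Wf (ln P))); [apply is_derive_const| exact HW].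
Qed.

End MC2.
Import MC2.

Module MC3.
Local Open Scope R_scope.

Definition poles (L : R) (s : C) : Prop := exists n : Z, s = (1 / 2, IZR n * (PI / L)).

Lemma W_one L s : 0 < L -> (Wf L s = RtoC 1 <-> poles L s).
Proof.
  intros HL. rewrite Wf_eq. unfold E, RtoC, poles. destruct s as [x y]. cbn [fst snd].
  split.
  - intros H. injection H as H1 H2.
    assert (He := exp_pos ((1 - 2 * x) * L)).
    assert (Hs : sin (-2 * L * y) = 0).
    { destruct (Rmult_integral _ _ H2); [lra|auto]. }
    assert (Hc2 := sin2_cos2 (-2 * L * y)). unfold Rsqr in Hc2. rewrite Hs in Hc2.
    assert (Hcp : 0 < cos (-2 * L * y)) by nra.
    assert (Hc : cos (-2 * L * y) = 1).
    { assert (Hm : (cos (-2 * L * y) - 1) * (cos (-2 * L * y) + 1) = 0).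
      { replace ((cos (-2 * L * y) - 1) * (cos (-2 * L * y) + 1)) with (0 * 0 + cos (-2 * L * y) * cos (-2 * L * y) - 1) by ring. lra. }
      destruct (Rmult_integral _ _ Hm); lra. }
    rewrite Hc in H1. rewrite Rmult_1_r in H1.
    assert (H1' : exp ((1 - 2 * x) * L) = exp 0) by (rewrite exp_0; lra).
    apply exp_inv in H1'.
    assert (Hx : (x = 1/2)%R) by (destruct (Rmult_integral _ _ H1') as [Hq|Hq]; lra).
    replace (-2 * L * y) with (2 * (- L * y)) in Hc by ring.
    rewrite cos_2a_sin in Hc.
    assert (Hs2 : sin (- L * y) = 0) by nra.
    destruct (sin_eq_0_0 _ Hs2) as [k Hk].
    exists (- k)%Z. rewrite opp_IZR. subst x. f_equal.
    apply (Rmult_eq_reg_l L); [|lra]. replace (L * (- IZR k * (PI / L))) with (- (IZR k * PI)) by (field; lra). lra.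
  - intros [n Hn]. injection Hn as -> ->.
    replace ((1 - 2 * (1/2)) * L) with 0 by field.
    replace (-2 * L * (IZR n * (PI / L))) with (2 * (IZR (- n) * PI)) by (rewrite opp_IZR; field; lra).
    rewrite cos_2a_sin, sin_2a, sin_eq_0_1 by (exists (- n)%Z; reflexivity).
    rewrite exp_0. f_equal; ring.
Qed.

Lemma Im_le_Cmod (w : C) : Rabs (snd w) <= Cmod w.
Proof. assert (H := Rmax_Cmod w). assert (H' := Rmax_r (Rabs (fst w)) (Rabs (snd w))). lra. Qed.

Lemma poles_discrete L (z : C) : 0 < L -> exists r, 0 < r /\
  forall w : C, w <> z -> Cmod (w - z) < r -> ~ poles L w.
Proof.
  intros HL.
  set (d := PI / L).
  assert (Hd : 0 < d) by (unfold d; apply Rdiv_lt_0_compat; [apply PI_RGT_0| auto]).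
  set (n0 := up (snd z / d - 1/2)).
  destruct (archimed (snd z / d - 1/2)) as [A1 A2]. fold n0 in A1, A2.
  assert (B1 : snd z - d/2 < IZR n0 * d).
  { apply Rmult_lt_compat_r with (r := d) in A1; auto.
    replace ((snd z / d - 1/2) * d) with (snd z - d/2) in A1 by (field; lra). lra. }
  assert (B2 : IZR n0 * d <= snd z + d/2).
  { assert (A3 : IZR n0 <= snd z / d + 1/2) by lra.
    apply Rmult_le_compat_r with (r := d) in A3; [|lra].
    replace ((snd z / d + 1/2) * d) with (snd z + d/2) in A3 by (field; lra). lra. }
  assert (Far : forall n : Z, n <> n0 -> d/2 <= Rabs (IZR n * d - snd z)).
  { intros n Hn. destruct (Z_lt_le_dec n n0) as [Hl|Hl].
    - assert (IZR n <= IZR n0 - 1) by (rewrite <- minus_IZR; apply IZR_le; lia).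
      assert (IZR n * d <= (IZR n0 - 1) * d) by (apply Rmult_le_compat_r; lra).
      rewrite Rabs_left1; lra.
    - assert (IZR n0 + 1 <= IZR n) by (rewrite <- plus_IZR; apply IZR_le; lia).
      assert ((IZR n0 + 1) * d <= IZR n * d) by (apply Rmult_le_compat_r; lra).
      rewrite Rabs_pos_eq; lra. }
  set (q0 := (1/2, IZR n0 * d) : C).
  destruct (classic (z = q0)) as [Hz|Hz].
  - exists (d/2). split; [lra|].
    intros w Hw Hwz [n Hn]. fold d in Hn.
    destruct (Z.eq_dec n n0) as [->|Hn0].
    + apply Hw. rewrite Hn, Hz. reflexivity.
    + assert (H := Far n Hn0). subst w. assert (H2 := Im_le_Cmod (((1/2)%R, (IZR n * d)%R) - z)%C).
      replace (snd (((1/2)%R, (IZR n * d)%R) - z)%C) with (IZR n * d - snd z) in H2 by (destruct z; simpl; ring).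
      lra.
  - assert (Hq : 0 < Cmod (q0 - z)%C).
    { apply Cmod_gt_0. intros H. apply Hz. replace z with (q0 - (q0 - z))%C by ring. rewrite H. ring. }
    exists (Rmin (d/2) (Cmod (q0 - z)%C)). split; [apply Rmin_pos; lra|].
    intros w Hw Hwz [n Hn]. fold d in Hn.
    assert (R1 := Rmin_l (d/2) (Cmod (q0 - z)%C)). assert (R2 := Rmin_r (d/2) (Cmod (q0 - z)%C)).
    destruct (Z.eq_dec n n0) as [->|Hn0].
    + assert (Hwq : w = q0) by (rewrite Hn; reflexivity). rewrite Hwq in Hwz. lra.
    + assert (H := Far n Hn0). subst w. assert (H2 := Im_le_Cmod (((1/2)%R, (IZR n * d)%R) - z)%C).
      replace (snd (((1/2)%R, (IZR n * d)%R) - z)%C) with (IZR n * d - snd z) in H2 by (destruct z; simpl; ring).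
      lra.
Qed.

End MC3.
Import MC3.

Module MC4.
Local Open Scope R_scope.

Ltac cfix := repeat change (plus ?x ?y) with (Cplus x y); match goal with |- ?x = ?y => change (@eq C x y) end.

Definition cconv (u : nat -> C) (l : C) := forall eps, 0 < eps -> exists N, forall n, (N <= n)%nat -> Cmod (u n - l)%C < eps.

Lemma cconv_series (a : nat -> C) l : cconv (@sum_n C_AbelianMonoid a) l -> @is_series C_AbsRing C_NormedModule a l.
Proof.
  intros H. unfold is_series. apply filterlim_locally. intros eps.
  destruct (H eps (cond_pos eps)) as [N HN]. exists N. intros n Hn.
  apply (@norm_compat1 C_AbsRing C_NormedModule). apply HN. exact Hn.
Qed.

Fixpoint cpn (v : C) (n : nat) : C := match n with O => RtoC 1 | S m => (v * cpn v m)%C end.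

Lemma Cmod_cpn v n : Cmod (cpn v n) = Cmod v ^ n.
Proof. induction n; simpl. apply Cmod_1. rewrite Cmod_mult, IHn. ring. Qed.

Lemma geom_closed (c W : C) n : W <> RtoC 1 ->
  @sum_n C_AbelianMonoid (fun k => c * cpn W (S k))%C n = (c * W * (1 - cpn W (S n)) / (1 - W))%C.
Proof.
  intros HW. assert (H1 : (1 - W)%C <> RtoC 0).
  { intros H. apply HW. replace W with (1 - (1 - W))%C by ring. rewrite H. ring. }
  induction n.
  - rewrite sum_O. simpl. field. auto.
  - rewrite sum_Sn, IHn. cfix. simpl. field. auto.
Qed.

Lemma geom_series (c W : C) : Cmod W < 1 ->
  cconv (@sum_n C_AbelianMonoid (fun k => c * cpn W (S k))%C) (c * W / (1 - W))%C.
Proof.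
  intros HW.
  assert (HW1 : W <> RtoC 1) by (intros H; rewrite H, Cmod_1 in HW; lra).
  assert (H1 : (1 - W)%C <> RtoC 0).
  { intros H. apply HW1. replace W with (1 - (1 - W))%C by ring. rewrite H. ring. }
  assert (Hm1 : 0 < Cmod (1 - W)%C) by (apply Cmod_gt_0; auto).
  intros eps Heps.
  assert (Hg := is_lim_seq_geom (Cmod W) ltac:(rewrite Rabs_pos_eq; [lra| apply Cmod_ge_0])).
  apply is_lim_seq_spec in Hg.
  set (K := Cmod (c * W)%C / Cmod (1 - W)%C + 1).
  assert (HK : 0 < K) by (unfold K; assert (0 <= Cmod (c * W)%C / Cmod (1 - W)%C) by (apply Rdiv_le_0_compat; [apply Cmod_ge_0|auto]); lra).
  destruct (Hg (mkposreal (eps / K) ltac:(apply Rdiv_lt_0_compat; auto))) as [N HN].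
  exists N. intros n Hn. rewrite geom_closed by auto.
  replace (c * W * (1 - cpn W (S n)) / (1 - W) - c * W / (1 - W))%C
    with (- (c * W / (1 - W)) * cpn W (S n))%C by (field; auto).
  rewrite Cmod_mult, Cmod_opp, Cmod_cpn.
  unfold Cdiv. rewrite Cmod_mult, Cmod_inv by auto.
  specialize (HN (S n) ltac:(lia)). simpl pos in HN.
  rewrite Rminus_0_r, Rabs_pos_eq in HN by (apply pow_le, Cmod_ge_0).
  assert (Hq : 0 <= Cmod W ^ S n) by (apply pow_le, Cmod_ge_0).
  assert (Hc : 0 <= Cmod (c * W)%C * / Cmod (1 - W)%C) by (apply Rmult_le_pos; [apply Cmod_ge_0| left; apply Rinv_0_lt_compat; auto]).
  assert (Hk2 : Cmod (c * W)%C * / Cmod (1 - W)%C < K) by (unfold K; unfold Rdiv; lra).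
  apply Rle_lt_trans with (K * Cmod W ^ S n).
  { apply Rmult_le_compat_r; lra. }
  apply (Rmult_lt_compat_l K) in HN; auto.
  replace (K * (eps / K)) with eps in HN by (field; lra). exact HN.
Qed.

Lemma series_even (a b : nat -> C) l : a 0%nat = RtoC 0 -> (forall k, a (2 * k + 1)%nat = RtoC 0) ->
  (forall k, a (2 * k + 2)%nat = b k) ->
  cconv (@sum_n C_AbelianMonoid b) l -> cconv (@sum_n C_AbelianMonoid a) l.
Proof.
  intros H0 H1 H2 Hb.
  assert (E2 : forall k, @sum_n C_AbelianMonoid a (2 * k + 2)%nat = @sum_n C_AbelianMonoid b k).
  { induction k.
    - simpl. rewrite !sum_Sn, sum_O. rewrite H0. specialize (H1 0%nat). specialize (H2 0%nat). simpl in H1, H2.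
      rewrite H1, H2. rewrite sum_O. cfix. ring.
    - replace (2 * S k + 2)%nat with (S (S (2 * k + 2))) by lia.
      rewrite !sum_Sn, IHk. replace (S (2 * k + 2)) with (2 * (S k) + 1)%nat by lia. rewrite H1.
      replace (S (2 * S k + 1)) with (2 * (S k) + 2)%nat by lia. rewrite H2.
      cfix. ring. }
  assert (E3 : forall k, @sum_n C_AbelianMonoid a (2 * k + 3)%nat = @sum_n C_AbelianMonoid b k).
  { intros k. replace (2 * k + 3)%nat with (S (2 * k + 2)) by lia. rewrite sum_Sn, E2.
    replace (S (2 * k + 2)) with (2 * (S k) + 1)%nat by lia. rewrite H1.
    cfix. ring. }
  intros eps Heps. destruct (Hb eps Heps) as [N HN].
  exists (2 * N + 2)%nat. intros n Hn.
  destruct (Nat.Even_or_Odd n) as [[m Hm]|[m Hm]].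
  - replace n with (2 * (m - 1) + 2)%nat by lia. rewrite E2. apply HN. lia.
  - replace n with (2 * (m - 1) + 3)%nat by lia. rewrite E3. apply HN. lia.
Qed.

End MC4.
Import MC4.

Module MC5.
Local Open Scope R_scope.

Lemma ln_pos' P : 1 < P -> 0 < ln P.
Proof. intros H. rewrite <- ln_1. apply ln_increasing; lra. Qed.

Lemma ff_pole_limit P (z0 : C) : 1 < P -> Wf (ln P) z0 = RtoC 1 ->
  filterlim (fun z => Cmod (ff P z)) (locally' (T := C_UniformSpace) z0) (Rbar_locally p_infty).
Proof.
  intros HP HW. unfold filterlim, filter_le, filtermap. intros Q [M HM].
  unfold locally', within.
  set (L := ln P). assert (HL : 0 < L) by (apply ln_pos'; auto).
  set (eps := / (Rabs M / (P - 1) + 2)).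
  assert (Ha : 0 <= Rabs M / (P - 1)) by (apply Rdiv_le_0_compat; [apply Rabs_pos| lra]).
  assert (Heps : 0 < eps) by (unfold eps; apply Rinv_0_lt_compat; lra).
  assert (Hc := @ex_derive_continuous C_AbsRing (AbsRing_NormedModule C_AbsRing) (Wf L) z0 (Wf_deriv L z0)).
  unfold continuous in Hc. rewrite filterlim_locally in Hc.
  destruct (Hc (mkposreal eps Heps)) as [d1 Hd1].
  destruct (poles_discrete L z0 HL) as [r [Hr Hdisc]].
  assert (Hd1p := cond_pos d1).
  apply (locally_Cmod z0 _ (Rmin d1 r)); [apply Rmin_pos; auto|].
  intros y Hy Hne. apply HM.
  assert (Hy1 : Cmod (y - z0)%C < d1) by (assert (H := Rmin_l d1 r); lra).
  assert (Hy2 : Cmod (y - z0)%C < r) by (assert (H := Rmin_r d1 r); lra).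
  assert (HWy : Cmod (Wf L y - Wf L z0)%C < eps) by (apply (Hd1 y); exact Hy1).
  fold L in HW. rewrite HW in HWy.
  assert (Hnp : ~ poles L y) by (apply Hdisc; auto).
  set (u := (1 - Wf L y)%C).
  assert (Hu : u <> RtoC 0).
  { intros H. apply Hnp. apply (W_one L y HL). unfold u in H.
    replace (Wf L y) with (1 - (1 - Wf L y))%C by ring. rewrite H. ring. }
  assert (Hum : 0 < Cmod u) by (apply Cmod_gt_0; auto).
  assert (Hue : Cmod u < eps).
  { unfold u. replace (1 - Wf L y)%C with (- (Wf L y - 1))%C by ring. rewrite Cmod_opp. exact HWy. }
  unfold ff. fold L. fold u.
  rewrite Cmod_mult, Cmod_R, (Rabs_pos_eq (P - 1)) by lra.
  assert (Hinv : Cmod (/ u)%C <= Cmod (/ u - 1)%C + 1).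
  { replace (/ u)%C with ((/ u - 1) + 1)%C at 1 by ring. eapply Rle_trans; [apply Cmod_triangle|]. rewrite Cmod_1. lra. }
  rewrite Cmod_inv in Hinv by auto.
  assert (Hbig : Rabs M / (P - 1) + 2 < / Cmod u).
  { replace (Rabs M / (P - 1) + 2) with (/ eps) by (unfold eps; rewrite Rinv_inv; auto).
    apply Rinv_lt_contravar; auto. apply Rmult_lt_0_compat; auto. }
  assert (H3 : Rabs M / (P - 1) + 1 < Cmod (/ u - 1)%C) by lra.
  apply (Rmult_lt_compat_r (P - 1)) in H3; [|lra].
  replace ((Rabs M / (P - 1) + 1) * (P - 1)) with (Rabs M + (P - 1)) in H3 by (field; lra).
  assert (M <= Rabs M) by apply Rle_abs. lra.
Qed.

Lemma cpow_E x s : cpow x s = E (fst s * ln x, snd s * ln x).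
Proof. reflexivity. Qed.

Lemma E_nat a b n : E (INR n * a, INR n * b) = cpn (E (a, b)) n.
Proof.
  induction n.
  - simpl. rewrite !Rmult_0_l. apply E_0.
  - rewrite S_INR. simpl cpn. rewrite <- IHn, <- E_add. f_equal. unfold Cplus. ceq.
Qed.

Lemma cpn_mult a b m : (cpn a m * cpn b m)%C = cpn (a * b) m.
Proof. induction m; simpl. ring. rewrite <- IHm. ring. Qed.

Lemma cpn_double e m : cpn e (2 * m) = cpn (e * e) m.
Proof.
  induction m. reflexivity.
  replace (2 * S m)%nat with (S (S (2 * m))) by lia. cbn [cpn]. rewrite IHm. ring.
Qed.

Lemma RtoC_pow x m : RtoC (x ^ m) = cpn (RtoC x) m.
Proof. induction m; simpl. reflexivity. rewrite <- IHm. unfold RtoC, Cmult. ceq. Qed.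

Lemma zeta_even (p : Z) N s k : 1 < IZR p ->
  INR (N (2 * k + 2)%nat) = (IZR p - 1) * IZR p ^ (k + 1) ->
  zeta_term p N s (2 * k + 2)%nat = (RtoC (IZR p - 1) * cpn (Wf (ln (IZR p)) s) (S k))%C.
Proof.
  intros HP HN. unfold zeta_term. rewrite HN, cpow_E.
  set (P := IZR p). set (L := ln P).
  assert (HP0 : 0 < P) by (unfold P; lra).
  assert (HPn : 0 < P ^ (2 * k + 2)) by (apply pow_lt; lra).
  rewrite ln_Rinv by exact HPn. rewrite ln_pow by exact HP0. fold L.
  replace (fst s * - (INR (2 * k + 2) * L), snd s * - (INR (2 * k + 2) * L))
    with (INR (2 * k + 2) * (- fst s * L), INR (2 * k + 2) * (- snd s * L)) by (f_equal; ring).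
  rewrite E_nat.
  set (e := E (- fst s * L, - snd s * L)).
  replace (2 * k + 2)%nat with (2 * (S k))%nat by lia.
  rewrite cpn_double. replace (k + 1)%nat with (S k) by lia.
  replace (RtoC ((P - 1) * P ^ S k)) with (RtoC (P - 1) * RtoC (P ^ S k))%C by (unfold RtoC, Cmult; ceq).
  rewrite RtoC_pow.
  rewrite <- Cmult_assoc, cpn_mult. f_equal. f_equal.
  assert (HEP : E (L, 0) = RtoC P).
  { unfold E, RtoC. cbn [fst snd]. rewrite cos_0, sin_0. unfold L. rewrite exp_ln by lra. f_equal; ring. }
  rewrite <- HEP. unfold e. rewrite <- !E_add. rewrite Wf_eq. f_equal. unfold Cplus. ceq.
Qed.

End MC5.
Import MC5.

Module MC6.
Local Open Scope R_scope.

Lemma complex_part (p : Z) (N : nat -> nat) : 1 < IZR p -> N 0%nat = 0%nat ->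
  (forall k, N (2 * k + 1)%nat = 0%nat) ->
  (forall k, INR (N (2 * k + 2)%nat) = (IZR p - 1) * IZR p ^ (k + 1)) ->
  complex_dimensions_are p N (1 / 2) (fun s : C => exists n : Z, s = (1 / 2, IZR n * (PI / ln (IZR p)))).
Proof.
  intros HP H0 H1 H2.
  set (P := IZR p). set (L := ln P).
  assert (HL : 0 < L) by (apply ln_pos'; auto).
  exists (ff P). split.
  - intros s Hs.
    set (W := Wf L s).
    assert (HWm : Cmod W < 1).
    { unfold W. rewrite Wf_eq, Cmod_E. cbn [fst]. assert (Hx : exp ((1 - 2 * fst s) * L) < exp 0) by (apply exp_increasing; nra). rewrite exp_0 in Hx. exact Hx. }
    assert (HW1 : W <> RtoC 1) by (intros H; rewrite H, Cmod_1 in HWm; lra).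
    assert (H1W : (1 - W)%C <> RtoC 0).
    { intros H. apply HW1. replace W with (1 - (1 - W))%C by ring. rewrite H. ring. }
    apply cconv_series.
    replace (ff P s) with (RtoC (P - 1) * W / (1 - W))%C.
    2:{ unfold ff. fold L. fold W. field. auto. }
    apply (series_even _ (fun k => RtoC (P - 1) * cpn W (S k))%C).
    + unfold zeta_term. rewrite H0. simpl INR. unfold RtoC, Cmult. ceq.
    + intros k. unfold zeta_term. rewrite H1. simpl INR. unfold RtoC, Cmult. ceq.
    + intros k. apply zeta_even; auto.
    + apply geom_series; auto.
  - split; [|split].
    + intros z. destruct (poles_discrete L z HL) as [r [Hr Hd]]. exists r. split; auto.
    + intros z Hz. apply ff_deriv. intros H. apply Hz. apply (W_one L z HL).
      replace (Wf L z) with (1 - (1 - Wf L z))%C by ring. fold L in H. rewrite H. ring.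
    + intros z0 Hz0. apply ff_pole_limit; auto. apply (W_one L z0 HL). exact Hz0.
Qed.

End MC6.
Import MC6.

Module MR2.
Local Open Scope R_scope.

Lemma exp_pow_nat x m : exp x ^ m = exp (INR m * x).
Proof.
  induction m. simpl. rewrite Rmult_0_l, exp_0. reflexivity.
  rewrite S_INR. simpl pow. rewrite IHm, <- exp_plus. f_equal. ring.
Qed.

Lemma u_even P (N : nat -> nat) sigma k : 1 < P ->
  INR (N (2 * k + 2)%nat) = (P - 1) * P ^ (k + 1) ->
  INR (N (2 * k + 2)%nat) * Rpower (/ (P ^ (2 * k + 2))) sigma
  = (P - 1) * exp (INR (k + 1) * ((1 - 2 * sigma) * ln P)).
Proof.
  intros HP HN. rewrite HN. unfold Rpower.
  assert (HPn : 0 < P ^ (2 * k + 2)) by (apply pow_lt; lra).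
  rewrite ln_Rinv by exact HPn. rewrite ln_pow by lra.
  rewrite <- (exp_ln P) at 2 by lra. rewrite exp_pow_nat.
  rewrite Rmult_assoc, <- exp_plus. f_equal. f_equal.
  replace (INR (2 * k + 2)) with (2 * INR (k + 1)) by (rewrite !plus_INR, mult_INR; simpl; ring).
  ring.
Qed.

Lemma real_part (p : Z) (N : nat -> nat) : 2 <= IZR p -> N 0%nat = 0%nat ->
  (forall k, N (2 * k + 1)%nat = 0%nat) ->
  (forall k, INR (N (2 * k + 2)%nat) = (IZR p - 1) * IZR p ^ (k + 1)) ->
  abscissa_of_convergence p N (1 / 2).
Proof.
  intros HP H0 H1 H2. set (P := IZR p). fold P in H2.
  assert (HL : 0 < ln P) by (rewrite <- ln_1; apply ln_increasing; unfold P; lra).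
  assert (HP1 : 1 < P) by (unfold P; lra).
  intros sigma. split.
  - intros Hs.
    set (r := exp ((1/2 - sigma) * ln P)).
    assert (Hr0 : 0 < r) by apply exp_pos.
    assert (Hr1 : r < 1).
    { unfold r. assert (Hx : exp ((1/2 - sigma) * ln P) < exp 0) by (apply exp_increasing; nra). rewrite exp_0 in Hx. exact Hx. }
    apply (@ex_series_le R_AbsRing R_CompleteNormedModule _ (fun n => (P - 1) * r ^ n)).
    + intros n. change (norm ?x) with (Rabs x).
      destruct (Nat.Even_or_Odd n) as [[m Hm]|[m Hm]].
      * destruct m as [|k].
        -- subst n. simpl. rewrite H0. simpl INR. rewrite Rmult_0_l, Rabs_R0. lra.
        -- replace n with (2 * k + 2)%nat by lia. rewrite u_even by auto.
           assert (He := exp_pos (INR (k + 1) * ((1 - 2 * sigma) * ln P))).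
           fold P. rewrite Rabs_pos_eq by (apply Rmult_le_pos; lra). right. f_equal. unfold r. rewrite exp_pow_nat. f_equal.
           replace (INR (2 * k + 2)) with (2 * INR (k + 1)) by (rewrite !plus_INR, mult_INR; simpl; ring).
           field.
      * subst n. rewrite H1. simpl INR. rewrite Rmult_0_l, Rabs_R0.
        apply Rmult_le_pos; [lra| apply pow_le; lra].
    + exists ((P - 1) * / (1 - r)).
      apply (is_series_scal_l (P - 1) (fun n => r ^ n)). apply is_series_geom. rewrite Rabs_pos_eq; lra.
  - intros Hs Hex. apply ex_series_lim_0 in Hex. apply is_lim_seq_spec in Hex.
    destruct (Hex (mkposreal (1/2) ltac:(lra))) as [M HM].
    specialize (HM (2 * M + 2)%nat ltac:(lia)). simpl pos in HM.
    rewrite u_even in HM by auto. fold P in HM.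
    assert (Hx : 0 <= INR (M + 1) * ((1 - 2 * sigma) * ln P)).
    { apply Rmult_le_pos. apply pos_INR. nra. }
    assert (He := exp_ineq1_le (INR (M + 1) * ((1 - 2 * sigma) * ln P))).
    rewrite Rminus_0_r, Rabs_pos_eq in HM by (apply Rmult_le_pos; lra).
    assert (1 <= P - 1) by (unfold P; lra). nra.
Qed.

End MR2.
Import MR2.

Module MP0.
Local Open Scope nat_scope.

Definition dec (P : nat -> Prop) (a : nat) : bool :=
  if excluded_middle_informative (P a) then true else false.

Lemma count_below_eq P n : count_below P n = length (filter (dec P) (seq 0 n)).
Proof. reflexivity. Qed.

Lemma count_ext (P Q : nat -> Prop) n : (forall a, a < n -> (P a <-> Q a)) -> count_below P n = count_below Q n.
Proof.
  intros H. rewrite !count_below_eq. f_equal. apply filter_ext_in. intros a Ha.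
  apply in_seq in Ha. unfold dec.
  destruct (excluded_middle_informative (P a)), (excluded_middle_informative (Q a)); auto.
  - exfalso. apply n0. apply H; auto. lia.
  - exfalso. apply n0. apply H; auto. lia.
Qed.

Lemma filter_shift (f : nat -> bool) n : forall s,
  length (filter f (seq s n)) = length (filter (fun i => f (s + i)) (seq 0 n)).
Proof.
  induction n; intros s. reflexivity.
  replace (S n) with (n + 1) by lia. rewrite !seq_app, !filter_app, !length_app.
  rewrite IHn. simpl. replace (s + (0 + n)) with (s + n) by lia. destruct (f (s + n)); reflexivity.
Qed.

Lemma count_S P n : count_below P (S n) = count_below P n + (if excluded_middle_informative (P n) then 1 else 0).
Proof.
  rewrite !count_below_eq. replace (S n) with (n + 1) by lia.
  rewrite seq_app, filter_app, length_app. simpl. unfold dec.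
  destruct (excluded_middle_informative (P n)); reflexivity.
Qed.

Lemma count_true P n : (forall a, a < n -> P a) -> count_below P n = n.
Proof.
  intros H. induction n. reflexivity.
  rewrite count_S, IHn by (intros; apply H; lia).
  destruct (excluded_middle_informative (P n)). lia. exfalso; apply n0, H; lia.
Qed.

Lemma count_false P n : (forall a, a < n -> ~ P a) -> count_below P n = 0.
Proof.
  intros H. induction n. reflexivity.
  rewrite count_S, IHn by (intros; apply H; lia).
  destruct (excluded_middle_informative (P n)). exfalso; apply (H n); auto. reflexivity.
Qed.

Lemma count_prod (P P1 P2 : nat -> Prop) A B : 0 < A ->
  (forall a, a < A * B -> (P a <-> P1 (a mod A) /\ P2 (a / A))) ->
  count_below P (A * B) = count_below P1 A * count_below P2 B.
Proof.
  intros HA. induction B; intros H.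
  - rewrite Nat.mul_0_r. rewrite !count_below_eq. simpl. lia.
  - rewrite count_S.
    replace (A * S B) with (A * B + A) by lia.
    rewrite !count_below_eq, seq_app, filter_app, length_app. rewrite <- !count_below_eq.
    rewrite IHB by (intros a Ha; apply H; lia).
    rewrite filter_shift. simpl.
    destruct (excluded_middle_informative (P2 B)) as [HB|HB].
    + replace (length (filter (fun i => dec P (A * B + i)) (seq 0 A))) with (count_below P1 A).
      * lia.
      * rewrite count_below_eq. f_equal. apply filter_ext_in. intros i Hi. apply in_seq in Hi.
        unfold dec.
        assert (Hm : (A * B + i) mod A = i).
        { rewrite Nat.mul_comm, Nat.add_comm, Nat.Div0.mod_add. apply Nat.mod_small. lia. }
        assert (Hd : (A * B + i) / A = B).
        { rewrite Nat.mul_comm, Nat.add_comm, Nat.div_add by lia. rewrite Nat.div_small by lia. lia. }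
        specialize (H (A * B + i) ltac:(nia)). rewrite Hm, Hd in H.
        destruct (excluded_middle_informative (P1 i)), (excluded_middle_informative (P (A * B + i))); auto; tauto.
    + replace (length (filter (fun i => dec P (A * B + i)) (seq 0 A))) with 0.
      * lia.
      * rewrite (filter_ext_in _ (fun _ => false)). rewrite filter_false. reflexivity.
        intros i Hi. apply in_seq in Hi. unfold dec.
        assert (Hd : (A * B + i) / A = B).
        { rewrite Nat.mul_comm, Nat.add_comm, Nat.div_add by lia. rewrite Nat.div_small by lia. lia. }
        specialize (H (A * B + i) ltac:(nia)). rewrite Hd in H.
        destruct (excluded_middle_informative (P (A * B + i))); auto. tauto.
Qed.

Lemma count_eq0 n : 0 < n -> count_below (fun q => q = 0) n = 1.
Proof.
  intros Hn. destruct n. lia. clear Hn.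
  induction n.
  - rewrite count_S. simpl. destruct (excluded_middle_informative (0 = 0)); [reflexivity| congruence].
  - rewrite count_S, IHn. destruct (excluded_middle_informative (S n = 0)); lia.
Qed.

End MP0.
Import MP0.

Module MP1.
Local Open Scope Z_scope.

Notation pw p n := (p ^ Z.of_nat n)%Z.

Lemma pw_pos p n : 0 < p -> 0 < pw p n.
Proof. intros. apply Z.pow_pos_nonneg; lia. Qed.

Lemma pw_add p a b : pw p (a + b) = pw p a * pw p b.
Proof. rewrite Nat2Z.inj_add. apply Z.pow_add_r; lia. Qed.

Lemma pw_divide p j k : (j <= k)%nat -> (pw p j | pw p k).
Proof. intros H. replace k with (j + (k - j))%nat by lia. rewrite pw_add. exists (pw p (k - j)). ring. Qed.

Lemma pw_le p j k : 0 < p -> (j <= k)%nat -> pw p j <= pw p k.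
Proof. intros. apply Z.pow_le_mono_r; lia. Qed.

Lemma mod_mod_le p x j k : (j <= k)%nat -> (x mod pw p k) mod pw p j = x mod pw p j.
Proof. intros H. apply Z.mod_mod_divide. apply pw_divide; auto. Qed.

Lemma padic_mod p x : is_padic p x -> forall d j, x (j + d)%nat mod pw p j = x j.
Proof.
  intros Hx d. induction d; intros j.
  - rewrite Nat.add_0_r. apply Z.mod_small. apply Hx.
  - replace (j + S d)%nat with (S (j + d)) by lia.
    rewrite <- (mod_mod_le p _ j (j + d)) by lia.
    destruct (Hx (j + d)%nat) as [_ H]. rewrite H. apply IHd.
Qed.

Lemma padic_mod' p x j k : is_padic p x -> (j <= k)%nat -> x k mod pw p j = x j.
Proof. intros Hx H. replace k with (j + (k - j))%nat by lia. apply padic_mod; auto. Qed.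

Lemma can_padic p a : 0 < p -> 0 <= a -> is_padic p (fun k => a mod pw p k).
Proof.
  intros Hp Ha n. split.
  - apply Z.mod_pos_bound, pw_pos; auto.
  - apply mod_mod_le. lia.
Qed.

Definition Kset (p : Z) (x : nat -> Z) : Prop :=
  is_padic p x /\ forall j, x (2 * j + 2)%nat = x (2 * j + 1)%nat.

Definition goodUpTo (p : Z) (m : nat) (a : Z) : Prop :=
  forall j, (2 * j + 2 <= m)%nat -> a mod pw p (2 * j + 2) = a mod pw p (2 * j + 1).

Lemma ball_iff p a n : 0 < p -> 0 <= a < pw p n ->
  (ball_in p (complement_in_Zp p (Kset p)) a n <-> ~ goodUpTo p n a).
Proof.
  intros Hp Ha. split.
  - intros H G.
    destruct (H (fun k => a mod pw p k) (can_padic p a Hp ltac:(lia)) ltac:(apply Z.mod_small; lia)) as [_ HK].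
    apply HK. split. apply can_padic; lia.
    intros j. destruct (le_lt_dec (2 * j + 2) n) as [Hj|Hj].
    + apply G; auto.
    + assert (pw p n <= pw p (2 * j + 1)) by (apply pw_le; lia).
      assert (pw p (2 * j + 1) <= pw p (2 * j + 2)) by (apply pw_le; lia).
      rewrite !Z.mod_small; lia.
  - intros G y Hy Hyn. split; auto. intros [_ HK]. apply G. intros j Hj.
    rewrite <- Hyn. rewrite !padic_mod' by (auto; lia). apply HK.
Qed.

Lemma goodUpTo_mod p m i a : 0 < p -> (i <= m)%nat -> (goodUpTo p i (a mod pw p m) <-> goodUpTo p i a).
Proof.
  intros Hp H. unfold goodUpTo. split; intros G j Hj; specialize (G j Hj);
  rewrite !mod_mod_le in * by lia; auto.
Qed.

Lemma maximal_iff p a n : 0 < p -> 0 <= a < pw p n -> (1 <= n)%nat ->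
  (maximal_ball_in p (complement_in_Zp p (Kset p)) a n <-> ~ goodUpTo p n a /\ goodUpTo p (n - 1) a).
Proof.
  intros Hp Ha Hn. unfold maximal_ball_in.
  assert (Hr : 0 <= a mod pw p (n - 1) < pw p (n - 1)) by (apply Z.mod_pos_bound, pw_pos; auto).
  rewrite ball_iff by auto. rewrite ball_iff by auto.
  rewrite goodUpTo_mod by (auto; lia).
  split.
  - intros [_ [_ [H1 H2]]]. split; auto. apply NNPP; auto.
  - intros [H1 H2]. repeat split; auto; lia.
Qed.

Lemma goodUpTo_odd p k a : goodUpTo p (2 * k + 1) a <-> goodUpTo p (2 * k) a.
Proof. unfold goodUpTo. split; intros G j Hj; apply G; lia. Qed.

Lemma goodUpTo_even p k a : goodUpTo p (2 * k + 2) a <->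
  goodUpTo p (2 * k + 1) a /\ a mod pw p (2 * k + 2) = a mod pw p (2 * k + 1).
Proof.
  unfold goodUpTo. split.
  - intros G. split. intros j Hj; apply G; lia. apply G; lia.
  - intros [G H] j Hj. destruct (Nat.eq_dec j k) as [->|Hne]; auto. apply G; lia.
Qed.

End MP1.
Import MP1.

Module MP2.
Local Open Scope Z_scope.

Lemma of_nat_pow p m : 0 <= p -> Z.of_nat (Z.to_nat p ^ m) = pw p m.
Proof. intros Hp. rewrite Nat2Z.inj_pow, Z2Nat.id; auto. Qed.

Lemma to_nat_pw p m : 0 <= p -> Z.to_nat (pw p m) = (Z.to_nat p ^ m)%nat.
Proof. intros Hp. rewrite Z2Nat.inj_pow by lia. rewrite Nat2Z.id. reflexivity. Qed.

Lemma count_neq0 n : count_below (fun q => q <> 0%nat) n = (n - 1)%nat.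
Proof.
  induction n. reflexivity.
  rewrite count_S, IHn. destruct (excluded_middle_informative (n <> 0%nat)); lia.
Qed.

Lemma mod_split p A x : 0 < A -> 0 < p ->
  x mod (A * p) = x mod A + A * ((x / A) mod p).
Proof.
  intros HA Hp. symmetry. apply Z.mod_unique_pos with ((x / A) / p).
  - assert (H1 := Z.mod_pos_bound x A HA). assert (H2 := Z.mod_pos_bound (x / A) p Hp). nia.
  - assert (H1 := Z.div_mod x A ltac:(lia)). assert (H2 := Z.div_mod (x / A) p ltac:(lia)).
    rewrite H1 at 1. rewrite H2 at 1. ring.
Qed.

Lemma G_count p k : 2 <= p ->
  count_below (fun b => goodUpTo p (2 * k + 1) (Z.of_nat b)) (Z.to_nat p ^ (2 * k + 1)) = (Z.to_nat p ^ (k + 1))%nat.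
Proof.
  intros Hp. set (pn := Z.to_nat p).
  assert (Hpn : (2 <= pn)%nat) by (unfold pn; lia).
  induction k.
  - simpl. rewrite Nat.mul_1_r. apply count_true. intros a _ j Hj. lia.
  - replace (2 * S k + 1)%nat with (2 * k + 3)%nat by lia.
    replace (pn ^ (2 * k + 3))%nat with (pn ^ (2 * k + 1) * (pn * pn))%nat
      by (replace (2 * k + 3)%nat with (2 * k + 1 + 2)%nat by lia; rewrite !Nat.pow_add_r, Nat.pow_1_r, Nat.pow_2_r; ring).
    set (A := (pn ^ (2 * k + 1))%nat).
    assert (HA : (0 < A)%nat) by (unfold A; apply Nat.neq_0_lt_0, Nat.pow_nonzero; lia).
    assert (HAZ : Z.of_nat A = pw p (2 * k + 1)) by (unfold A, pn; apply of_nat_pow; lia).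
    rewrite (count_prod _ (fun b => goodUpTo p (2 * k + 1) (Z.of_nat b)) (fun q => (q mod pn = 0)%nat)).
    + fold A in IHk. rewrite IHk.
      rewrite (count_prod _ (fun q => q = 0%nat) (fun _ => True)) by (lia || (intros; tauto)).
      rewrite count_eq0 by lia. rewrite count_true by auto.
      replace (S k + 1)%nat with (S (k + 1)) by lia. simpl. lia.
    + exact HA.
    + intros r Hr.
      set (x := Z.of_nat r).
      assert (HA' : 0 < pw p (2 * k + 1)) by (apply pw_pos; lia).
      rewrite Nat2Z.inj_mod, HAZ.
      replace (2 * k + 3)%nat with (2 * (k + 1) + 1)%nat by lia.
      rewrite goodUpTo_odd.
      replace (2 * (k + 1))%nat with (2 * k + 2)%nat by lia.
      rewrite goodUpTo_even. rewrite <- (goodUpTo_mod p (2 * k + 1) (2 * k + 1) x) by lia.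
      replace (pw p (2 * k + 2)) with (pw p (2 * k + 1) * p)
        by (replace (2 * k + 2)%nat with (2 * k + 1 + 1)%nat by lia; rewrite (pw_add p (2 * k + 1) 1); change (Z.of_nat 1) with 1%Z; rewrite Z.pow_1_r; ring).
      rewrite mod_split by lia.
      assert (Hq : ((r / A) mod pn = 0)%nat <-> (x / pw p (2 * k + 1)) mod p = 0).
      { rewrite <- HAZ. unfold x. rewrite <- Nat2Z.inj_div.
        replace ((Z.of_nat (r / A)) mod p) with (Z.of_nat ((r / A) mod pn)) by (rewrite Nat2Z.inj_mod; unfold pn; rewrite Z2Nat.id by lia; reflexivity). lia. }
      rewrite Hq.
      split.
      * intros [G H]. split; auto. nia.
      * intros [G H]. split; auto. rewrite H. ring.
Qed.

End MP2.
Import MP2.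

Module MP3.
Local Open Scope Z_scope.

Lemma range_conv p n a : 0 < p -> (a < Z.to_nat (pw p n))%nat -> 0 <= Z.of_nat a < pw p n.
Proof.
  intros Hp H. apply Nat2Z.inj_lt in H. rewrite Z2Nat.id in H by (assert (H0 := pw_pos p n Hp); lia). lia.
Qed.

Lemma sm0 p : string_mult p (complement_in_Zp p (Kset p)) 0 = 0%nat.
Proof. unfold string_mult. apply count_false. intros a _ [H _]. lia. Qed.

Lemma sm_odd p k : 2 <= p -> string_mult p (complement_in_Zp p (Kset p)) (2 * k + 1) = 0%nat.
Proof.
  intros Hp. unfold string_mult. apply count_false. intros a Ha H.
  apply range_conv in Ha; [|lia].
  apply maximal_iff in H; [|lia|auto|lia].
  replace (2 * k + 1 - 1)%nat with (2 * k)%nat in H by lia.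
  rewrite goodUpTo_odd in H. tauto.
Qed.

Lemma sm_even p k : 2 <= p -> string_mult p (complement_in_Zp p (Kset p)) (2 * k + 2) =
  (Z.to_nat p ^ (k + 1) * (Z.to_nat p - 1))%nat.
Proof.
  intros Hp. unfold string_mult. set (pn := Z.to_nat p).
  assert (Hpn : (2 <= pn)%nat) by (unfold pn; lia).
  rewrite to_nat_pw by lia. fold pn.
  replace (pn ^ (2 * k + 2))%nat with (pn ^ (2 * k + 1) * pn)%nat
    by (replace (2 * k + 2)%nat with (2 * k + 1 + 1)%nat by lia; rewrite (Nat.pow_add_r pn (2 * k + 1) 1), Nat.pow_1_r; reflexivity).
  set (A := (pn ^ (2 * k + 1))%nat).
  assert (HA : (0 < A)%nat) by (unfold A; apply Nat.neq_0_lt_0, Nat.pow_nonzero; lia).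
  assert (HAZ : Z.of_nat A = pw p (2 * k + 1)) by (unfold A, pn; apply of_nat_pow; lia).
  rewrite (count_prod _ (fun b => goodUpTo p (2 * k + 1) (Z.of_nat b)) (fun q => q <> 0%nat)).
  - unfold A. rewrite G_count by auto. rewrite count_neq0. fold pn. reflexivity.
  - exact HA.
  - intros a Ha.
    assert (Hr : 0 <= Z.of_nat a < pw p (2 * k + 2)).
    { split. lia. apply Nat2Z.inj_lt in Ha. rewrite Nat2Z.inj_mul, HAZ in Ha.
      replace (pw p (2 * k + 2)) with (pw p (2 * k + 1) * p)
        by (replace (2 * k + 2)%nat with (2 * k + 1 + 1)%nat by lia; rewrite (pw_add p (2 * k + 1) 1); change (Z.of_nat 1) with 1%Z; rewrite Z.pow_1_r; ring).
      unfold pn in Ha. rewrite Z2Nat.id in Ha by lia. lia. }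
    rewrite maximal_iff by (auto; lia).
    replace (2 * k + 2 - 1)%nat with (2 * k + 1)%nat by lia.
    rewrite goodUpTo_even. rewrite (Z.mod_small (Z.of_nat a) (pw p (2 * k + 2))) by lia.
    rewrite Nat2Z.inj_mod, HAZ.
    rewrite <- (goodUpTo_mod p (2 * k + 1) (2 * k + 1) (Z.of_nat a)) by lia.
    assert (Hd := Nat.div_mod_eq a A). assert (Hm := Nat.mod_upper_bound a A ltac:(lia)).
    assert (Hiff : Z.of_nat a <> Z.of_nat a mod pw p (2 * k + 1) <-> (a / A <> 0)%nat).
    { rewrite <- HAZ, <- Nat2Z.inj_mod. split.
      - intros H Hq. apply H. f_equal. rewrite Hq in Hd. lia.
      - intros H Heq. apply Nat2Z.inj in Heq. nia. }
    rewrite <- Hiff. tauto.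
Qed.

End MP3.
Import MP3.

Module MP4.
Local Open Scope Z_scope.

Lemma lin_mod A q c : 0 < A -> 0 <= c < A -> (A * q + c) mod A = c /\ (A * q + c) / A = q.
Proof.
  intros HA Hc. replace (A * q + c) with (c + q * A) by ring. split.
  - rewrite Z.mod_add by lia. apply Z.mod_small; auto.
  - rewrite Z.div_add by lia. rewrite Z.div_small by auto. ring.
Qed.

Lemma padic0 p x : is_padic p x -> x 0%nat = 0.
Proof. intros H. destruct (H 0%nat) as [[H1 H2] _]. simpl in H2. lia. Qed.

Lemma compact_K p : 2 <= p -> padic_compact p (Kset p).
Proof.
  intros Hp. split.
  - intros x [H _]; auto.
  - intros x Hx HK.
    assert (Hj : exists j, x (2 * j + 2)%nat <> x (2 * j + 1)%nat).
    { apply not_all_ex_not. intros H. apply HK. split; auto. }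
    destruct Hj as [j Hj]. exists (2 * j + 2)%nat. intros y Hy Hyx [_ HKy].
    apply Hj. rewrite <- Hyx.
    rewrite <- (padic_mod' p x (2 * j + 1) (2 * j + 2)) by (auto; lia).
    rewrite <- Hyx. rewrite padic_mod' by (auto; lia). apply HKy.
Qed.

Definition cs_of (p : Z) : list Z := map Z.of_nat (seq 0 (Z.to_nat p)).

Lemma in_cs p c : 0 <= p -> (In c (cs_of p) <-> 0 <= c < p).
Proof.
  intros Hp. unfold cs_of. rewrite in_map_iff. split.
  - intros [n [<- Hn]]. apply in_seq in Hn. lia.
  - intros Hc. exists (Z.to_nat c). split. lia. apply in_seq. lia.
Qed.

Lemma pw2 p k : pw p (k + 2) = p ^ Z.of_nat 2 * pw p k.
Proof. rewrite pw_add. ring. Qed.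

Lemma self_similar p : 2 <= p -> forall y, Kset p y <->
  exists c, In c (cs_of p) /\ exists x, Kset p x /\ forall k, y k = sim_map p 2 c x k.
Proof.
  intros Hp.
  assert (Hp2 : 0 < p ^ Z.of_nat 2) by (apply pw_pos; lia).
  assert (Hp2' : p ^ Z.of_nat 2 = p * p) by (change (Z.of_nat 2) with 2%Z; ring).
  intros y. split.
  - intros [Hy HK].
    set (c := y 1%nat).
    assert (Hc : 0 <= c < p) by (destruct (Hy 1%nat) as [H _]; simpl in H; unfold c; lia).
    assert (Hy2 : forall k, y (k + 2)%nat = p ^ Z.of_nat 2 * (y (k + 2)%nat / p ^ Z.of_nat 2) + c).
    { intros k. rewrite (Z.div_mod (y (k + 2)%nat) (p ^ Z.of_nat 2)) at 1 by lia.
      f_equal. rewrite padic_mod' by (auto; lia). unfold c. apply (HK 0%nat). }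
    exists c. split. apply in_cs; lia.
    set (x := fun k => y (k + 2)%nat / p ^ Z.of_nat 2).
    assert (Hyx : forall k, y (k + 2)%nat = p ^ Z.of_nat 2 * x k + c) by exact Hy2.
    assert (Hx : is_padic p x).
    { intros n. split.
      - destruct (Hy (n + 2)%nat) as [Hr _]. unfold x. split.
        + apply Z.div_pos; lia.
        + apply Z.div_lt_upper_bound; auto. rewrite <- pw2. lia.
      - destruct (Hy (n + 2)%nat) as [_ Hc2].
        replace (S (n + 2)) with (S n + 2)%nat in Hc2 by lia.
        rewrite (pw2 p n) in Hc2.
        rewrite mod_split in Hc2 by (auto; apply pw_pos; lia).
        rewrite Hyx, (Hyx n) in Hc2.
        destruct (lin_mod (p ^ Z.of_nat 2) (x (S n)) c Hp2 ltac:(nia)) as [E1 E2].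
        rewrite E1, E2 in Hc2. nia. }
    exists x. split.
    + split; auto. intros j. unfold x.
      replace (2 * j + 2 + 2)%nat with (2 * (j + 1) + 2)%nat by lia.
      replace (2 * j + 1 + 2)%nat with (2 * (j + 1) + 1)%nat by lia.
      rewrite HK. reflexivity.
    + intros k. unfold sim_map. destruct k as [|[|k]].
      * simpl. rewrite Z.mod_1_r. apply (padic0 p y Hy).
      * simpl (1 - 2)%nat. rewrite (padic0 p x Hx). change (pw p 1) with (p ^ 1). rewrite Z.pow_1_r.
        rewrite Z.mul_0_r, Z.add_0_r. rewrite Z.mod_small by lia. reflexivity.
      * replace (S (S k) - 2)%nat with k by lia. replace (S (S k)) with (k + 2)%nat by lia.
        rewrite Hyx. rewrite Z.mod_small. ring.
        destruct (Hy (k + 2)%nat) as [Hr _]. rewrite Hyx in Hr. lia.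
  - intros [c [Hc [x [[Hx HKx] Hy]]]].
    apply in_cs in Hc; [|lia].
    assert (Hx0 := padic0 p x Hx).
    assert (Y0 : y 0%nat = 0) by (rewrite Hy; unfold sim_map; simpl; apply Z.mod_1_r).
    assert (Y1 : y 1%nat = c).
    { rewrite Hy. unfold sim_map. simpl (1 - 2)%nat. rewrite Hx0. change (pw p 1) with (p ^ 1). rewrite Z.pow_1_r.
      rewrite Z.mul_0_r, Z.add_0_r. apply Z.mod_small; lia. }
    assert (Yk : forall k, y (k + 2)%nat = c + p ^ Z.of_nat 2 * x k).
    { intros k. rewrite Hy. unfold sim_map. replace (k + 2 - 2)%nat with k by lia.
      apply Z.mod_small. rewrite pw2. destruct (Hx k) as [[H1 H2] _]. nia. }
    assert (Y2 : y 2%nat = c) by (change 2%nat with (0 + 2)%nat; rewrite Yk, Hx0; ring).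
    split.
    + intros n. split. rewrite Hy. apply Z.mod_pos_bound. apply pw_pos; lia.
      destruct n as [|[|k]].
      * rewrite Y0. apply Z.mod_1_r.
      * rewrite Y2, Y1. change (pw p 1) with (p ^ 1). rewrite Z.pow_1_r.
        apply Z.mod_small; lia.
      * replace (S (S (S k))) with (S k + 2)%nat by lia. replace (S (S k)) with (k + 2)%nat by lia.
        rewrite !Yk, pw2.
        rewrite mod_split by (auto; apply pw_pos; lia).
        replace (c + p ^ Z.of_nat 2 * x (S k)) with (p ^ Z.of_nat 2 * x (S k) + c) by ring.
        destruct (lin_mod (p ^ Z.of_nat 2) (x (S k)) c Hp2 ltac:(nia)) as [E1 E2].
        rewrite E1, E2. destruct (Hx k) as [_ E3]. rewrite E3. reflexivity.
    + intros j. destruct j.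
      * simpl. rewrite Y2, Y1. reflexivity.
      * replace (2 * S j + 2)%nat with ((2 * j + 2) + 2)%nat by lia.
        replace (2 * S j + 1)%nat with ((2 * j + 1) + 2)%nat by lia.
        rewrite !Yk, HKx. reflexivity.
Qed.

End MP4.
Import MP4.

Lemma N_even_real p k : (2 <= p)%Z ->
  INR (string_mult p (complement_in_Zp p (Kset p)) (2 * k + 2)) = (IZR p - 1) * IZR p ^ (k + 1).
Proof.
  intros Hp. rewrite sm_even by auto.
  rewrite mult_INR, pow_INR, minus_INR by lia.
  rewrite INR_IZR_INZ, Z2Nat.id by lia. simpl INR. ring.
Qed.

Theorem theorem3p1 :
  forall p : Z, prime p ->
  exists (m : nat) (cs : list Z) (K : (nat -> Z) -> Prop),
    (1 <= m)%nat /\ (2 <= length cs)%nat /\ NoDup cs /\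
    ss_attractor p m cs K /\
    abscissa_of_convergence p (string_mult p (complement_in_Zp p K)) (1 / 2) /\
    complex_dimensions_are p (string_mult p (complement_in_Zp p K)) (1 / 2)
      (fun s : C => exists n : Z, s = (1 / 2, IZR n * (PI / ln (IZR p)))).
Proof.
  intros p Hp. assert (H2 := prime_ge_2 p Hp).
  exists 2%nat, (cs_of p), (Kset p).
  assert (HP : 2 <= IZR p) by (apply IZR_le; exact H2).
  split; [lia|]. split.
  { unfold cs_of. rewrite length_map, length_seq. lia. }
  split.
  { unfold cs_of. apply NoDup_map_NoDup_ForallPairs; [|apply seq_NoDup].
    intros a b _ _ H. apply Nat2Z.inj; auto. }
  split.
  { split; [apply compact_K; auto|]. split.
    - exists (fun _ => 0%Z). split.
      + intros n. split.
        * split; [lia| apply pw_pos; lia].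
        * apply Z.mod_0_l. assert (H := pw_pos p n ltac:(lia)). lia.
      + intros j. reflexivity.
    - apply self_similar; auto. }
  split.
  - apply real_part; auto.
    + apply sm0.
    + intros k. apply sm_odd; auto.
    + intros k. apply N_even_real; auto.
  - apply complex_part; [lra| | |].
    + apply sm0.
    + intros k. apply sm_odd; auto.
    + intros k. apply N_even_real; auto.
Qed.
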